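(* Let $P$ be a program which is safe w.r.t. a mode $M$ and satisfies $M$, and whose non-unit clauses are pairwise mutually exclusive w.r.t. $M$. Then for any non-basic atom $A_0$ which satisfies $M$ and any basic goal $G_0$, there exists at most one goal $(A_1,G_1)$ such that $A_1$ is a non-basic atom and $(A_0,G_0)\Rightarrow_P(A_1,G_1)$.
   Context: Syntax. Predicate symbols $\mathit{true}$, $=$, $\neq$ are basic, all others non-basic; the set of function symbols is infinite. Basic atoms: $\mathit{true}$, $t_1=t_2$, $t_1\neq t_2$ (disequation); non-basic atoms $p(t_1,\dots,t_m)$, $p$ non-basic. A goal is a conjunction of atoms ('','' associative, neutral element $\mathit{true}$); it is basic if all its atoms are basic. A clause $C$ is $A\leftarrow G$ with non-basic head $hd(C)$ and body $bd(C)$; it is a unit clause iff its body is basic. A program is a set of clauses. All mgu's are relevant and idempotent. A variable $X$ is a local variable of goal $G$ in clause $H\leftarrow G_1,G,G_2$ iff $X\in vars(G)-vars(H,G_1,G_2)$. Operational semantics (program $P$): (1) $(t_1=t_2,G)\longmapsto_P G\vartheta$ if $t_1,t_2$ unify with mgu $\vartheta$; (2) $(t_1\neq t_2,G)\longmapsto_P G$ if not unifiable; (3) $(A,G)\longmapsto_P(bd(C),G)\vartheta$ if $A$ is non-basic, $C$ a renamed apart clause of $P$ and $\vartheta$ an mgu of $A$ and $hd(C)$ (a step using $C$). $\longmapsto^*_P$ is the reflexive-transitive closure. For $C\in P$ and $A_0$ non-basic, $(A_0,G_0)\Rightarrow_C(A_n,G_n)$ iff there is a derivation $(A_0,G_0)\longmapsto_P\cdots\longmapsto_P(A_n,G_n)$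 with $n>0$ whose first step uses $C$, with $A_i$ basic for $0<i<n$, and either $A_n$ non-basic or $(A_n,G_n)=\mathit{true}$. $(A_0,G_0)\Rightarrow_P G'$ iff $(A_0,G_0)\Rightarrow_C G'$ for some $C\in P$. Modes. A mode for non-basic $p$ of arity $h$ is $p(m_1,\dots,m_h)$, $m_i\in\{+,?\}$; $t_i$ is an input argument iff $m_i=+$; variables in input arguments are input variables. A mode for a program contains exactly one mode per non-basic predicate occurring in it. An atom satisfies $M$ iff $M$ has a mode for its predicate and its input arguments are ground. $P$ satisfies $M$ iff for every non-basic $A_0$ satisfying $M$ and every non-basic $A$ and goal $G$ with $A_0\longmapsto^*_P(A,G)$, $A$ satisfies $M$. A clause $C$ is safe w.r.t. $M$ iff every variable of every disequation in $bd(C)$ is an input variable of $hd(C)$ or a local variable of that disequation in $C$; a program is safe iff all its clauses are. Satisfiability. A ground basic goal holds iff each atom is $\mathit{true}$, $t=t$, or $t_1\neq t_2$ with $t_1,t_2$ distinct ground terms. A conjunction $D$ of disequations is satisfiable w.r.t. a set $V$ of variables iff there is a ground substitution $\sigma$ with domain $V$ such that every ground instance of $D\sigma$ holds. Guard. $grd(C)=bd(C)$ if all atoms of $bd(C)$ are disequations; otherwise it is the conjunction of disequations of $bd(C)$ to the left of the leftmost atom that is not a disequation. Mutual exclusion. For renamed apart clauses $C_1: p(t_1,u_1)\leftarrow G_1$ and $C_2: p(t_2,u_2)\leftarrow G_2$, where $t_1,t_2$ are the tuples of input arguments of $p$ under $M$ and $u_1,u_2$ the remaining arguments, $C_1,C_2$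 are mutually exclusive w.r.t. $M$ iff either $t_1,t_2$ are not unifiable, or they are unifiable via an mgu $\vartheta$ and $(grd(C_1),grd(C_2))\vartheta$ is not satisfiable w.r.t. $vars(t_1,t_2)$ (empty tuples unify via the identity). *)

(* Defs.v *)
From Stdlib Require Import List.
Import ListNotations.

Inductive term : Type :=
| Var (x : nat)
| Fn (f : nat) (ts : list term).

Fixpoint tsubst (s : nat -> term) (t : term) : term :=
  match t with
  | Var x => s x
  | Fn f ts => Fn f (map (tsubst s) ts)
  end.

Fixpoint tvars (t : term) : list nat :=
  match t with
  | Var x => [x]
  | Fn _ ts => flat_map tvars ts
  end.

Definition lvars (ts : list term) : list nat := flat_map tvars ts.

Definition ground (t : term) : Prop := tvars t = [].

(* Atoms.  The basic atom [true] is the neutral element of ",", so goals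
   are lists of atoms with [true] omitted; the empty goal is [true]. *)
Inductive atom : Type :=
| AEq (t1 t2 : term)
| ANeq (t1 t2 : term)
| APred (p : nat) (ts : list term).

Definition goal := list atom.

Definition is_basic (a : atom) : Prop :=
  match a with APred _ _ => False | _ => True end.

Definition basic_goal (g : goal) : Prop := forall a, In a g -> is_basic a.

Definition asubst (s : nat -> term) (a : atom) : atom :=
  match a with
  | AEq t1 t2 => AEq (tsubst s t1) (tsubst s t2)
  | ANeq t1 t2 => ANeq (tsubst s t1) (tsubst s t2)
  | APred p ts => APred p (map (tsubst s) ts)
  end.

Definition avars (a : atom) : list nat :=
  match a with
  | AEq t1 t2 | ANeq t1 t2 => tvars t1 ++ tvars t2
  | APred _ ts => lvars ts
  end.

Definition gsubst (s : nat -> term) (g : goal) : goal := map (asubst s) g.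
Definition gvars (g : goal) : list nat := flat_map avars g.

Definition ren (r : nat -> nat) : nat -> term := fun x => Var (r x).
Definition injective_ren (r : nat -> nat) : Prop :=
  forall x y, r x = r y -> x = y.

Definition unifies (s : nat -> term) (l1 l2 : list term) : Prop :=
  map (tsubst s) l1 = map (tsubst s) l2.

Definition unifiable (l1 l2 : list term) : Prop := exists s, unifies s l1 l2.

(* relevant: vars(theta) = dom(theta) u range-vars(theta) within V *)
Definition relevant (s : nat -> term) (V : list nat) : Prop :=
  forall x, s x <> Var x -> In x V /\ (forall y, In y (tvars (s x)) -> In y V).

Definition idempotent (s : nat -> term) : Prop :=
  forall x, tsubst s (s x) = s x.

Definition is_mgu (s : nat -> term) (l1 l2 : list term) : Prop :=
  unifies s l1 l2 /\
  (forall s', unifies s' l1 l2 -> exists e, forall x, s' x = tsubst e (s x)) /\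
  relevant s (lvars (l1 ++ l2)) /\
  idempotent s.

(* clause  p(args) <- body ; the head is non-basic by construction *)
Record clause : Type := Clause { cpred : nat; cargs : list term; cbody : goal }.

Definition chead (C : clause) : atom := APred (cpred C) (cargs C).

Definition csubst (s : nat -> term) (C : clause) : clause :=
  Clause (cpred C) (map (tsubst s) (cargs C)) (gsubst s (cbody C)).

Definition cvars (C : clause) : list nat := lvars (cargs C) ++ gvars (cbody C).

Definition variant_clause (C C' : clause) : Prop :=
  exists r, injective_ren r /\ C' = csubst (ren r) C.

Definition unit_clause (C : clause) : Prop := basic_goal (cbody C).

Definition program := clause -> Prop.

Definition step_using (P : program) (C : clause) (g g' : goal) : Prop :=
  exists p ts G C' s,
    g = APred p ts :: G /\ P C /\
    variant_clause C C' /\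
    (forall x, In x (cvars C') -> ~ In x (gvars g)) /\
    cpred C' = p /\ is_mgu s ts (cargs C') /\
    g' = gsubst s (cbody C' ++ G).

Inductive step (P : program) : goal -> goal -> Prop :=
| st_eq t1 t2 G s :
    is_mgu s [t1] [t2] -> step P (AEq t1 t2 :: G) (gsubst s G)
| st_neq t1 t2 G :
    ~ unifiable [t1] [t2] -> step P (ANeq t1 t2 :: G) G
| st_pred C g g' : step_using P C g g' -> step P g g'.

Inductive steps (P : program) : goal -> goal -> Prop :=
| steps_refl g : steps P g g
| steps_trans g g' g'' : step P g g' -> steps P g' g'' -> steps P g g''.

Definition final_goal (g : goal) : Prop :=
  g = [] \/ exists p ts G, g = APred p ts :: G.

Inductive basic_run (P : program) : goal -> goal -> Prop :=
| br_stop g : final_goal g -> basic_run P g g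
| br_step a G g1 g2 :
    is_basic a -> step P (a :: G) g1 -> basic_run P g1 g2 ->
    basic_run P (a :: G) g2.

Definition derives_with (P : program) (C : clause) (g g' : goal) : Prop :=
  exists g1, step_using P C g g1 /\ basic_run P g1 g'.

Definition derives (P : program) (g g' : goal) : Prop :=
  exists C, P C /\ derives_with P C g g'.

(* M p h = Some ms : the mode of the predicate p of arity h;
   true = '+' (input), false = '?' *)
Definition mode := nat -> nat -> option (list bool).

Definition input_args (ms : list bool) (ts : list term) : list term :=
  map fst (filter snd (combine ts ms)).

Definition input_vars (M : mode) (p : nat) (ts : list term) : list nat :=
  match M p (length ts) with
  | Some ms => lvars (input_args ms ts)
  | None => []
  end.

Definition atom_sat (M : mode) (a : atom) : Prop :=
  match a with
  | APred p ts => exists ms, M p (length ts) = Some ms /\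
                   (forall t, In t (input_args ms ts) -> ground t)
  | _ => False
  end.

Definition mode_for (M : mode) (P : program) : Prop :=
  (forall p h ms, M p h = Some ms -> length ms = h) /\
  (forall C, P C -> forall p ts, In (APred p ts) (chead C :: cbody C) ->
     exists ms, M p (length ts) = Some ms).

Definition prog_satisfies (M : mode) (P : program) : Prop :=
  forall p0 ts0 p ts G,
    atom_sat M (APred p0 ts0) ->
    steps P [APred p0 ts0] (APred p ts :: G) ->
    atom_sat M (APred p ts).

(* safety: each variable of a disequation in the body is an input variable
   of the head or a local variable of that disequation *)
Definition safe_clause (M : mode) (C : clause) : Prop :=
  forall i t1 t2, nth_error (cbody C) i = Some (ANeq t1 t2) ->
  forall x, In x (tvars t1 ++ tvars t2) ->
    In x (input_vars M (cpred C) (cargs C)) \/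
    ~ In x (lvars (cargs C) ++ gvars (firstn i (cbody C))
                            ++ gvars (skipn (S i) (cbody C))).

Definition safe (M : mode) (P : program) : Prop :=
  forall C, P C -> safe_clause M C.

Definition holds (g : goal) : Prop :=
  forall a, In a g ->
    match a with
    | AEq t1 t2 => t1 = t2
    | ANeq t1 t2 => ground t1 /\ ground t2 /\ t1 <> t2
    | APred _ _ => False
    end.

Definition satisfiable (D : goal) (V : list nat) : Prop :=
  exists s,
    (forall x, In x V -> ground (s x)) /\
    (forall x, ~ In x V -> s x = Var x) /\
    (forall t, (forall x, In x (gvars (gsubst s D)) -> ground (t x)) ->
               holds (gsubst t (gsubst s D))).

Fixpoint guard (g : goal) : goal :=
  match g with
  | ANeq t1 t2 :: r => ANeq t1 t2 :: guard r
  | _ => []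
  end.

Definition mutually_exclusive (M : mode) (C1 C2 : clause) : Prop :=
  forall C1' C2',
    variant_clause C1 C1' -> variant_clause C2 C2' ->
    (forall x, In x (cvars C1') -> ~ In x (cvars C2')) ->
    cpred C1' = cpred C2' -> length (cargs C1') = length (cargs C2') ->
    forall ms, M (cpred C1') (length (cargs C1')) = Some ms ->
    let t1 := input_args ms (cargs C1') in
    let t2 := input_args ms (cargs C2') in
    ~ unifiable t1 t2 \/
    exists s, is_mgu s t1 t2 /\
      ~ satisfiable (gsubst s (guard (cbody C1') ++ guard (cbody C2')))
                    (lvars (t1 ++ t2)).

Definition goal_variant (g1 g2 : goal) : Prop :=
  exists r, injective_ren r /\ gsubst (ren r) g1 = g2.

(* Main.v *)
Require Import Defs.
From Stdlib Require Import List Arith Lia Classical ClassicalEpsilon.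
Import ListNotations.

Fixpoint term_ind' (P : term -> Prop) (HV : forall x, P (Var x))
  (HF : forall f ts, Forall P ts -> P (Fn f ts)) (t : term) : P t :=
  match t with
  | Var x => HV x
  | Fn f ts => HF f ts ((fix go (l : list term) : Forall P l :=
      match l with [] => Forall_nil _ | u :: l' => Forall_cons _ (term_ind' P HV HF u) (go l') end) ts)
  end.

Lemma tsubst_comp a b u : tsubst a (tsubst b u) = tsubst (fun x => tsubst a (b x)) u.
Proof.
  induction u using term_ind'; simpl; auto.
  f_equal. rewrite map_map. induction H; simpl; auto. f_equal; auto.
Qed.

Lemma tsubst_ext a b u : (forall x, In x (tvars u) -> a x = b x) -> tsubst a u = tsubst b u.
Proof.
  induction u using term_ind'; simpl; intros E.
  - apply E; auto.
  - f_equal. induction H; simpl in *; auto.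
    f_equal.
    + apply H. intros; apply E; apply in_or_app; auto.
    + apply IHForall. intros; apply E; apply in_or_app; auto.
Qed.

Lemma tsubst_var u : tsubst Var u = u.
Proof.
  induction u using term_ind'; simpl; auto.
  f_equal. induction H; simpl; auto. f_equal; auto.
Qed.

Lemma tvars_tsubst s u y : In y (tvars (tsubst s u)) <-> exists x, In x (tvars u) /\ In y (tvars (s x)).
Proof.
  induction u using term_ind'; simpl.
  - split; [intros; exists x; auto | intros [z [[<-|[]] H]]; auto].
  - induction H; simpl.
    + split; [tauto | intros [z [[] _]]].
    + rewrite in_app_iff, H, IHForall. split.
      * intros [[z [A B]]|[z [A B]]]; exists z; rewrite in_app_iff; auto.
      * intros [z [A B]]. rewrite in_app_iff in A. destruct A; [left|right]; exists z; auto.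
Qed.

Lemma tvars_ren r u : tvars (tsubst (ren r) u) = map r (tvars u).
Proof.
  induction u using term_ind'; simpl; auto.
  induction H; simpl; auto. rewrite map_app, H, IHForall; auto.
Qed.

Lemma ground_id s u : ground u -> tsubst s u = u.
Proof.
  intros G. rewrite <- (tsubst_var u) at 2. apply tsubst_ext. unfold ground in G. rewrite G. intros _ [].
Qed.

Lemma ground_tsubst s u : (forall x, In x (tvars u) -> ground (s x)) -> ground (tsubst s u).
Proof.
  intros H. unfold ground. destruct (tvars (tsubst s u)) as [|y l] eqn:E; auto.
  exfalso. assert (In y (tvars (tsubst s u))) by (rewrite E; left; auto).
  apply tvars_tsubst in H0. destruct H0 as [x [A B]]. specialize (H x A). unfold ground in H. rewrite H in B. inversion B.
Qed.

Lemma ground_var_of s u x : In x (tvars u) -> ground (tsubst s u) -> ground (s x).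
Proof.
  intros I G. unfold ground. destruct (tvars (s x)) as [|y l] eqn:E; auto.
  exfalso. assert (In y (tvars (tsubst s u))). { apply tvars_tsubst. exists x. rewrite E. split; auto. left; auto. }
  unfold ground in G. rewrite G in H. inversion H.
Qed.

Lemma tsubst_self a u : tsubst a u = u -> forall y, In y (tvars u) -> a y = Var y.
Proof.
  induction u using term_ind'; simpl; intros E y I.
  - destruct I as [<-|[]]; auto.
  - injection E as E. induction H; simpl in *. destruct I.
    injection E as E1 E2. apply in_app_iff in I. destruct I; auto.
Qed.

Lemma tsubst_is_var a u y : tsubst a u = Var y -> exists z, u = Var z /\ a z = Var y.
Proof. destruct u; simpl; intros H; [eauto | discriminate]. Qed.

Lemma map_tsubst_comp a b l : map (tsubst a) (map (tsubst b) l) = map (tsubst (fun x => tsubst a (b x))) l.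
Proof. rewrite map_map. apply map_ext. intros; apply tsubst_comp. Qed.

Lemma map_tsubst_ext a b l : (forall x, In x (lvars l) -> a x = b x) -> map (tsubst a) l = map (tsubst b) l.
Proof.
  intros H. apply map_ext_in. intros t I. apply tsubst_ext. intros x Ix. apply H.
  unfold lvars. apply in_flat_map. eauto.
Qed.

Lemma map_tsubst_var l : map (tsubst Var) l = l.
Proof. rewrite <- (map_id l) at 2. apply map_ext. apply tsubst_var. Qed.

Lemma lvars_ren r l : lvars (map (tsubst (ren r)) l) = map r (lvars l).
Proof. unfold lvars. induction l; simpl; auto. rewrite map_app, tvars_ren, IHl; auto. Qed.

Lemma asubst_comp a b x : asubst a (asubst b x) = asubst (fun y => tsubst a (b y)) x.
Proof. destruct x; simpl; try rewrite !tsubst_comp; auto. rewrite map_tsubst_comp; auto. Qed.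

Lemma gsubst_comp a b g : gsubst a (gsubst b g) = gsubst (fun y => tsubst a (b y)) g.
Proof. unfold gsubst. rewrite map_map. apply map_ext. apply asubst_comp. Qed.

Lemma asubst_ext a b x : (forall y, In y (avars x) -> a y = b y) -> asubst a x = asubst b x.
Proof.
  destruct x; simpl; intros H.
  - f_equal; apply tsubst_ext; intros; apply H; apply in_or_app; auto.
  - f_equal; apply tsubst_ext; intros; apply H; apply in_or_app; auto.
  - f_equal. apply map_tsubst_ext; auto.
Qed.

Lemma gsubst_ext a b g : (forall y, In y (gvars g) -> a y = b y) -> gsubst a g = gsubst b g.
Proof.
  intros H. unfold gsubst. apply map_ext_in. intros x I. apply asubst_ext. intros y Iy.
  apply H. unfold gvars. apply in_flat_map. eauto.
Qed.

Lemma gsubst_var g : gsubst Var g = g.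
Proof.
  rewrite <- (map_id g) at 2. unfold gsubst. apply map_ext. intros x.
  destruct x; simpl; rewrite ?tsubst_var, ?map_tsubst_var; auto.
Qed.

Lemma avars_ren r x : avars (asubst (ren r) x) = map r (avars x).
Proof. destruct x; simpl; rewrite ?map_app, ?tvars_ren, ?lvars_ren; auto. Qed.

Lemma gvars_ren r g : gvars (gsubst (ren r) g) = map r (gvars g).
Proof. unfold gvars, gsubst. induction g; simpl; auto. rewrite map_app, avars_ren, IHg; auto. Qed.

Lemma cvars_ren r C : cvars (csubst (ren r) C) = map r (cvars C).
Proof. unfold cvars, csubst; simpl. rewrite map_app, lvars_ren, gvars_ren; auto. Qed.

Lemma csubst_comp_ren r1 r2 C : csubst (ren r2) (csubst (ren r1) C) = csubst (ren (fun x => r2 (r1 x))) C.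
Proof.
  unfold csubst; simpl. f_equal.
  - rewrite map_tsubst_comp. reflexivity.
  - rewrite gsubst_comp. reflexivity.
Qed.

Lemma lvars_in x l : In x (lvars l) <-> exists t, In t l /\ In x (tvars t).
Proof. unfold lvars. rewrite in_flat_map. firstorder. Qed.

Lemma gvars_in x g : In x (gvars g) <-> exists a, In a g /\ In x (avars a).
Proof. unfold gvars. rewrite in_flat_map. firstorder. Qed.

Lemma input_args_map ms f ts : input_args ms (map f ts) = map f (input_args ms ts).
Proof.
  unfold input_args. revert ms; induction ts; intros [|b ms]; simpl; auto.
  destruct b; simpl; auto. f_equal; auto.
Qed.

Lemma input_args_in ms ts t : In t (input_args ms ts) -> In t ts.
Proof.
  unfold input_args. revert ms; induction ts; intros [|b ms]; simpl; try tauto.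
  destruct b; simpl; eauto. intros [->|H]; eauto.
Qed.

Lemma in_map_inj (r : nat -> nat) x l : injective_ren r -> In (r x) (map r l) -> In x l.
Proof. intros Hr H. apply in_map_iff in H. destruct H as [y [E I]]. apply Hr in E; subst; auto. Qed.

Lemma extend_inj (S : list nat) (f : nat -> nat) :
  (forall x y, In x S -> In y S -> f x = f y -> x = y) ->
  exists r, injective_ren r /\ forall x, In x S -> r x = f x.
Proof.
  induction S as [|a S IH]; intros Hf.
  - exists (fun x => x). split; [intros x y H; auto | intros _ []].
  - destruct IH as [r [Hr E]]. { intros; apply Hf; simpl; auto. }
    destruct (in_dec Nat.eq_dec a S).
    + exists r. split; auto. intros x [<-|I]; auto.
    + set (sw := fun v => if Nat.eq_dec v (r a) then f a else if Nat.eq_dec v (f a) then r a else v).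
      assert (swi : forall v, sw (sw v) = v).
      { intros v. unfold sw. destruct (Nat.eq_dec v (r a)); destruct (Nat.eq_dec (f a) (r a)); subst; try congruence;
        repeat (destruct Nat.eq_dec; try congruence). }
      exists (fun x => sw (r x)). split.
      * intros x y H. apply Hr. rewrite <- (swi (r x)), <- (swi (r y)), H. auto.
      * intros x [<-|I].
        -- unfold sw. destruct Nat.eq_dec; congruence.
        -- rewrite E by auto. unfold sw.
           destruct (Nat.eq_dec (f x) (r a)).
           { exfalso. rewrite <- E in e by auto. apply Hr in e. subst; auto. }
           destruct (Nat.eq_dec (f x) (f a)); auto.
           exfalso. apply Hf in e; simpl; auto. subst; auto.
Qed.

Lemma rinv_ex (r : nat -> nat) : injective_ren r -> exists ri : nat -> nat, forall x, ri (r x) = x.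
Proof.
  intros Hr. exists (fun y => epsilon (inhabits 0) (fun x => r x = y)).
  intros x. apply Hr. apply (epsilon_spec (inhabits 0) (fun z => r z = r x)). eauto.
Qed.

Lemma var_mgu s1 s2 e e' G :
  (forall x, In x (gvars G) -> s2 x = tsubst e (s1 x)) ->
  (forall x, In x (gvars G) -> s1 x = tsubst e' (s2 x)) ->
  goal_variant (gsubst s1 G) (gsubst s2 G).
Proof.
  intros H1 H2.
  assert (K : forall x y, In x (gvars G) -> In y (tvars (s1 x)) ->
            exists z, e y = Var z /\ e' z = Var y).
  { intros x y Ix Iy.
    assert (tsubst (fun v => tsubst e' (e v)) (s1 x) = s1 x).
    { rewrite <- tsubst_comp, <- H1, <- H2; auto. }
    pose proof (tsubst_self _ _ H y Iy). apply tsubst_is_var in H0. exact H0. }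
  set (f := fun y => match e y with Var z => z | _ => y end).
  destruct (extend_inj (gvars (gsubst s1 G)) f) as [r [Hr Er]].
  { intros y1 y2 I1 I2 Ef.
    unfold gsubst in I1, I2. rewrite gvars_in in I1, I2.
    destruct I1 as [a1 [Ia1 Iy1]]. destruct I2 as [a2 [Ia2 Iy2]].
    apply in_map_iff in Ia1, Ia2. destruct Ia1 as [b1 [<- Ib1]]. destruct Ia2 as [b2 [<- Ib2]].
    assert (AV : forall b y, In b G -> In y (avars (asubst s1 b)) -> exists x, In x (gvars G) /\ In y (tvars (s1 x))).
    { intros b y Ib Iy. destruct b; simpl in Iy; rewrite ?in_app_iff in Iy;
      [destruct Iy as [Iy|Iy]..|]; try (apply tvars_tsubst in Iy; destruct Iy as [x [A B]]; exists x; split; auto;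
          apply gvars_in; exists (AEq t1 t2); simpl; rewrite in_app_iff; auto; fail);
      try (apply tvars_tsubst in Iy; destruct Iy as [x [A B]]; exists x; split; auto;
          apply gvars_in; exists (ANeq t1 t2); simpl; rewrite in_app_iff; auto; fail).
      rewrite lvars_ren in Iy || idtac. apply lvars_in in Iy. destruct Iy as [t [It Iyt]].
      apply in_map_iff in It. destruct It as [u [<- Iu]]. apply tvars_tsubst in Iyt. destruct Iyt as [x [A B]].
      exists x; split; auto. apply gvars_in. exists (APred p ts). split; auto. simpl. apply lvars_in; eauto. }
    destruct (AV _ _ Ib1 Iy1) as [x1 [Ix1 Hx1]]. destruct (AV _ _ Ib2 Iy2) as [x2 [Ix2 Hx2]].
    destruct (K _ _ Ix1 Hx1) as [z1 [A1 B1]]. destruct (K _ _ Ix2 Hx2) as [z2 [A2 B2]].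
    unfold f in Ef. rewrite A1, A2 in Ef. subst. congruence. }
  exists r. split; auto.
  rewrite gsubst_comp. apply gsubst_ext. intros x Ix.
  rewrite H1 by auto. apply tsubst_ext. intros y Iy. unfold ren. rewrite Er.
  - destruct (K _ _ Ix Iy) as [z [A _]]. unfold f. rewrite A. auto.
  - unfold gsubst. apply gvars_in in Ix. destruct Ix as [a [Ia Ixa]].
    apply gvars_in. exists (asubst s1 a). split. apply in_map; auto.
    destruct a; simpl in *; rewrite ?in_app_iff in *.
    + destruct Ixa; [left|right]; apply tvars_tsubst; eauto.
    + destruct Ixa; [left|right]; apply tvars_tsubst; eauto.
    + apply lvars_in in Ixa. destruct Ixa as [t [It Ixt]]. apply lvars_in. exists (tsubst s1 t).
      split. apply in_map; auto. apply tvars_tsubst; eauto.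
Qed.

Lemma step_eq_variant r s s' t1 t2 G :
  injective_ren r -> is_mgu s [t1] [t2] ->
  is_mgu s' [tsubst (ren r) t1] [tsubst (ren r) t2] ->
  goal_variant (gsubst s G) (gsubst s' (gsubst (ren r) G)).
Proof.
  intros Hr [U1 [M1 _]] [U2 [M2 _]].
  rewrite gsubst_comp.
  set (s2 := fun y => tsubst s' (ren r y)).
  destruct (M1 s2) as [e He].
  { unfold unifies in *; simpl in *. injection U2 as U2. unfold s2. f_equal. rewrite !tsubst_comp in U2. exact U2. }
  destruct (rinv_ex r Hr) as [ri Hri].
  destruct (M2 (fun y => s (ri y))) as [e' He'].
  { unfold unifies in *; simpl in *. injection U1 as U1. rewrite !tsubst_comp. simpl.
    f_equal. transitivity (tsubst s t1). apply tsubst_ext; intros; simpl; rewrite Hri; auto. rewrite U1.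
    apply tsubst_ext; intros; simpl; rewrite Hri; auto. }
  apply (var_mgu _ _ e e'); intros x _; auto.
  rewrite <- Hri at 1. rewrite He'. reflexivity.
Qed.

Lemma not_final_basic a G : is_basic a -> ~ final_goal (a :: G).
Proof. intros B [H|[p [ts [G' H]]]]; [discriminate|]. injection H as -> _. exact B. Qed.

Lemma step_eq_inv P t1 t2 G g1 : step P (AEq t1 t2 :: G) g1 -> exists s, is_mgu s [t1] [t2] /\ g1 = gsubst s G.
Proof.
  intros H. inversion H; subst; eauto.
  destruct H0 as [p [ts [G' [C' [s [E _]]]]]]. discriminate.
Qed.

Lemma step_neq_inv P t1 t2 G g1 : step P (ANeq t1 t2 :: G) g1 -> ~ unifiable [t1] [t2] /\ g1 = G.
Proof.
  intros H. inversion H; subst; eauto.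
  destruct H0 as [p [ts [G' [C' [s [E _]]]]]]. discriminate.
Qed.

Lemma run_variant P g gf : basic_run P g gf ->
  forall r gf', injective_ren r -> basic_run P (gsubst (ren r) g) gf' -> goal_variant gf gf'.
Proof.
  induction 1 as [g Hf|a G g1 g2 Ba S R IH]; intros r gf' Hr R2.
  - destruct Hf as [->|[p [ts [G ->]]]].
    + inversion R2; subst. exists (fun x => x). split. intros x y; auto. reflexivity.
    + inversion R2; subst.
      * exists r. split; auto.
      * match goal with H : is_basic _ |- _ => simpl in H; contradiction end.
  - simpl in R2. inversion R2 as [g' Hf'|a' G' g1' g2' Ba' S' R' E1 E2]; subst.
    + exfalso. eapply not_final_basic; [|exact Hf']. destruct a; simpl; auto.
    + destruct a as [t1 t2|t1 t2|p ts]; simpl in *; try contradiction.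
      * apply step_eq_inv in S. destruct S as [s [Ms ->]].
        apply step_eq_inv in S'. destruct S' as [s' [Ms' ->]].
        destruct (step_eq_variant r s s' t1 t2 G Hr Ms Ms') as [r1 [Hr1 E1]].
        eapply (IH r1); auto. rewrite E1. auto.
      * apply step_neq_inv in S. destruct S as [_ ->].
        apply step_neq_inv in S'. destruct S' as [_ ->].
        eapply IH; eauto.
Qed.

Lemma psi_ex C r1 r2 : injective_ren r1 ->
  exists psi : nat -> term,
    (forall x, In x (cvars C) -> psi (r1 x) = Var (r2 x)) /\
    (forall y, ~ In y (cvars (csubst (ren r1) C)) -> psi y = Var y).
Proof.
  intros H1. destruct (rinv_ex r1 H1) as [ri Hri].
  exists (fun y => if in_dec Nat.eq_dec y (cvars (csubst (ren r1) C)) then Var (r2 (ri y)) else Var y).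
  split.
  - intros x Ix. destruct in_dec as [_|n]. rewrite Hri; auto.
    exfalso; apply n. rewrite cvars_ren. apply in_map; auto.
  - intros y n. destruct in_dec; tauto.
Qed.

Lemma cargs_in C x : In x (lvars (cargs C)) -> In x (cvars C).
Proof. unfold cvars; intros; apply in_or_app; auto. Qed.
Lemma cbody_in C x : In x (gvars (cbody C)) -> In x (cvars C).
Proof. unfold cvars; intros; apply in_or_app; auto. Qed.

Lemma gsubst_app s a b : gsubst s (a ++ b) = gsubst s a ++ gsubst s b.
Proof. apply map_app. Qed.

Lemma first_variant P C g h1 h2 : step_using P C g h1 -> step_using P C g h2 -> goal_variant h1 h2.
Proof.
  intros [p [ts [G [C1 [s1 [Eg [_ [[r1 [Hr1 EC1]] [Ap1 [Ep1 [M1 ->]]]]]]]]]]]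
         [p' [ts' [G' [C2 [s2 [Eg' [_ [[r2 [Hr2 EC2]] [Ap2 [Ep2 [M2 ->]]]]]]]]]]].
  rewrite Eg in Eg'. injection Eg' as <- <- <-. subst g.
  destruct (psi_ex C r1 r2 Hr1) as [psi [Pa Pb]].
  destruct (psi_ex C r2 r1 Hr2) as [psi' [Pa' Pb']].
  subst C1 C2.
  set (C1 := csubst (ren r1) C) in *. set (C2 := csubst (ren r2) C) in *.
  assert (Gv : forall x, In x (gvars G) -> In x (gvars (APred p ts :: G))).
  { intros x I. simpl. apply in_or_app; auto. }
  assert (Tv : forall x, In x (lvars ts) -> In x (gvars (APred p ts :: G))).
  { intros x I. simpl. apply in_or_app; auto. }
  assert (PA : map (tsubst psi) (cargs C1) = cargs C2).
  { simpl. rewrite map_tsubst_comp. apply map_tsubst_ext. intros x I. simpl. apply Pa.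
    apply cargs_in; auto. }
  assert (PB : gsubst psi (cbody C1) = cbody C2).
  { simpl. rewrite gsubst_comp. apply gsubst_ext. intros x I. simpl. apply Pa. apply cbody_in; auto. }
  assert (PA' : map (tsubst psi') (cargs C2) = cargs C1).
  { simpl. rewrite map_tsubst_comp. apply map_tsubst_ext. intros x I. simpl. apply Pa'.
    apply cargs_in; auto. }
  assert (PG : gsubst psi G = G).
  { rewrite <- (gsubst_var G) at 2. apply gsubst_ext. intros x I. apply Pb. intros I'. eapply Ap1; eauto. }
  assert (PT : map (tsubst psi) ts = ts).
  { rewrite <- (map_tsubst_var ts) at 2. apply map_tsubst_ext. intros x I. apply Pb. intros I'. eapply Ap1; eauto. }
  assert (PT' : map (tsubst psi') ts = ts).
  { rewrite <- (map_tsubst_var ts) at 2. apply map_tsubst_ext. intros x I. apply Pb'. intros I'. eapply Ap2; eauto. }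
  set (sg := fun y => tsubst s2 (psi y)).
  assert (E2 : gsubst s2 (cbody C2 ++ G) = gsubst sg (cbody C1 ++ G)).
  { unfold sg. rewrite <- gsubst_comp. rewrite (gsubst_app psi), PB, PG. reflexivity. }
  rewrite E2.
  destruct M1 as [U1 [G1 _]]. destruct M2 as [U2 [G2 _]].
  destruct (G1 sg) as [e He].
  { unfold unifies, sg in *. rewrite <- !map_tsubst_comp. rewrite PT, PA. auto. }
  destruct (G2 (fun y => tsubst s1 (psi' y))) as [e' He'].
  { unfold unifies in *. rewrite <- !map_tsubst_comp. rewrite PT', PA'. auto. }
  apply (var_mgu _ _ e e'); intros x Ix; auto.
  unfold sg. rewrite tsubst_comp. rewrite (tsubst_ext _ (fun y => tsubst s1 (psi' y))) by (intros; rewrite He'; auto).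
  rewrite <- tsubst_comp.
  assert (RT : tsubst psi' (psi x) = Var x).
  { unfold gvars in Ix. rewrite flat_map_app in Ix. apply in_app_iff in Ix. destruct Ix as [Ix|Ix].
    - assert (Ic : In x (cvars C1)) by (apply cbody_in; auto).
      unfold C1 in Ic. rewrite cvars_ren in Ic. apply in_map_iff in Ic. destruct Ic as [x0 [<- I0]].
      rewrite Pa by auto. simpl. rewrite Pa'; auto.
    - rewrite Pb. simpl. apply Pb'. intros I'; eapply Ap2; eauto. intros I'; eapply Ap1; eauto. }
  rewrite RT. reflexivity.
Qed.

Lemma guard_prefix b : exists rest, b = guard b ++ rest.
Proof.
  induction b as [|a b [rest IH]]; simpl. exists []; auto.
  destruct a; try (exists (AEq t1 t2 :: b); reflexivity); try (exists (APred p ts :: b); reflexivity).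
  exists rest. simpl. f_equal; auto.
Qed.

Lemma guard_neq b a : In a (guard b) -> exists u1 u2, a = ANeq u1 u2.
Proof.
  induction b as [|x b IH]; simpl. tauto.
  destruct x; simpl; try tauto. intros [<-|I]; eauto.
Qed.

Lemma guard_in b a : In a (guard b) -> In a b.
Proof.
  induction b as [|x b IH]; simpl. tauto.
  destruct x; simpl; try tauto.
Qed.

Lemma guard_subst s b : guard (gsubst s b) = gsubst s (guard b).
Proof. induction b as [|x b IH]; simpl; auto. destruct x; simpl; auto. f_equal; auto. Qed.

Lemma run_guard P D : forall rest gf, basic_run P (D ++ rest) gf ->
  (exists p ts G, gf = APred p ts :: G) ->
  (forall a, In a D -> exists u1 u2, a = ANeq u1 u2) ->
  forall u1 u2, In (ANeq u1 u2) D -> ~ unifiable [u1] [u2].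
Proof.
  induction D as [|a D IH]; intros rest gf R Hf Hn u1 u2 I. destruct I.
  destruct (Hn a (or_introl eq_refl)) as [v1 [v2 ->]].
  simpl in R. inversion R as [g' Hf'|a' G' g1 g2 Ba S R' E1 E2]; subst.
  - destruct Hf as [p [ts [G E]]]. discriminate.
  - apply step_neq_inv in S. destruct S as [NU ->].
    destruct I as [E|I].
    + injection E as <- <-. auto.
    + eapply IH; eauto. intros; apply Hn; simpl; auto.
Qed.

Lemma run_basic P g gf : basic_run P g gf -> basic_goal g -> basic_goal gf.
Proof.
  induction 1 as [g Hf|a G g1 g2 Ba S R IH]; intros Bg; auto.
  apply IH. destruct a as [t1 t2|t1 t2|p ts]; simpl in Ba; try contradiction.
  - apply step_eq_inv in S. destruct S as [s [_ ->]].
    intros b Ib. unfold gsubst in Ib. apply in_map_iff in Ib. destruct Ib as [b0 [<- Ib0]].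
    assert (is_basic b0) by (apply Bg; simpl; auto). destruct b0; simpl in *; auto.
  - apply step_neq_inv in S. destruct S as [_ ->]. intros b Ib; apply Bg; simpl; auto.
Qed.

Lemma basic_gsubst s g : basic_goal g -> basic_goal (gsubst s g).
Proof.
  intros Bg b Ib. unfold gsubst in Ib. apply in_map_iff in Ib. destruct Ib as [b0 [<- Ib0]].
  specialize (Bg b0 Ib0). destruct b0; simpl in *; auto.
Qed.

Lemma inputs_match s ts0 cs ms : unifies s ts0 cs ->
  (forall t, In t (input_args ms ts0) -> ground t) ->
  map (tsubst s) (input_args ms cs) = input_args ms ts0.
Proof.
  intros U Hg. rewrite <- input_args_map. unfold unifies in U. rewrite <- U, input_args_map.
  rewrite <- (map_id (input_args ms ts0)) at 2. apply map_ext_in. intros; apply ground_id; auto.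
Qed.

Lemma input_ground s ts0 cs ms : unifies s ts0 cs ->
  (forall t, In t (input_args ms ts0) -> ground t) ->
  forall x, In x (lvars (input_args ms cs)) -> ground (s x).
Proof.
  intros U Hg x Ix. apply lvars_in in Ix. destruct Ix as [t [It Ixt]].
  apply (ground_var_of s t x Ixt). apply Hg. rewrite <- (inputs_match s ts0 cs ms U Hg).
  apply in_map; auto.
Qed.

Lemma side M C r th ts0 ms (om : nat -> term) :
  safe_clause M C -> injective_ren r ->
  M (cpred C) (length (cargs C)) = Some ms ->
  (forall x, ~ In x (lvars (ts0 ++ cargs (csubst (ren r) C))) -> th x = Var x) ->
  (forall x, In x (cvars (csubst (ren r) C)) -> ~ In x (lvars ts0)) ->
  (forall x, In x (lvars (input_args ms (cargs (csubst (ren r) C)))) -> ground (th x) /\ om x = th x) ->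
  forall u1 u2, In (ANeq u1 u2) (cbody (csubst (ren r) C)) ->
  ~ unifiable [tsubst th u1] [tsubst th u2] -> tsubst om u1 <> tsubst om u2.
Proof.
  intros Hs Hr HM Hrel Hap Hin u1 u2 I NU E. apply NU. exists om.
  simpl in I. unfold gsubst in I. apply in_map_iff in I. destruct I as [b [Eb Ib]].
  destruct b as [v1 v2|v1 v2|]; simpl in Eb; try discriminate. injection Eb as <- <-.
  destruct (In_nth_error _ _ Ib) as [i Hi].
  assert (K : forall v, (forall x, In x (tvars v) -> In x (tvars v1 ++ tvars v2)) ->
              tsubst om (tsubst th (tsubst (ren r) v)) = tsubst om (tsubst (ren r) v)).
  { intros v Hv. rewrite !tsubst_comp. apply tsubst_ext. intros x0 Ix0. simpl.
    destruct (Hs i v1 v2 Hi x0 (Hv x0 Ix0)) as [Inp|Loc].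
    - unfold input_vars in Inp. rewrite HM in Inp.
      assert (Ix : In (r x0) (lvars (input_args ms (cargs (csubst (ren r) C))))).
      { simpl. rewrite input_args_map, lvars_ren. apply in_map; auto. }
      destruct (Hin _ Ix) as [Gr Eo]. rewrite ground_id by auto. auto.
    - rewrite Hrel. reflexivity.
      unfold lvars. rewrite flat_map_app. fold (lvars ts0). fold (lvars (cargs (csubst (ren r) C))).
      rewrite in_app_iff. intros [A|A].
      + eapply Hap; eauto. rewrite cvars_ren. apply in_map. unfold cvars. apply in_or_app. right.
        apply gvars_in. exists (ANeq v1 v2). split; auto.
      + apply Loc. apply in_or_app. left. simpl in A. rewrite lvars_ren in A. eapply in_map_inj; eauto. }
  unfold unifies. simpl. f_equal.
  rewrite !K; auto. intros x Ix; apply in_or_app; auto. intros x Ix; apply in_or_app; auto.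
Qed.

Lemma rel_id s V : relevant s V -> forall x, ~ In x V -> s x = Var x.
Proof. intros R x n. apply NNPP. intros H. apply n. exact (proj1 (R x H)). Qed.

Lemma lvars_app a b : lvars (a ++ b) = lvars a ++ lvars b.
Proof. unfold lvars. apply flat_map_app. Qed.

Lemma max_lt x l : In x l -> x < S (list_max l).
Proof.
  intros I. assert (x <= list_max l).
  { pose proof (list_max_le l (list_max l)) as [H _]. specialize (H (le_n _)).
    rewrite Forall_forall in H. auto. }
  lia.
Qed.

Lemma nonunit P C p0 ts0 G0 h p ts G :
  step_using P C (APred p0 ts0 :: G0) h -> basic_goal G0 ->
  basic_run P h (APred p ts :: G) -> ~ unit_clause C.
Proof.
  intros [p' [ts' [G' [C' [s [Eg [_ [[r [Hr EC]] [_ [_ [_ ->]]]]]]]]]]] BG R U.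
  injection Eg as <- <- <-. subst C'.
  assert (B : basic_goal (gsubst s (cbody (csubst (ren r) C) ++ G0))).
  { apply basic_gsubst. intros a Ia. apply in_app_iff in Ia. destruct Ia as [Ia|Ia]; auto.
    simpl in Ia. apply (basic_gsubst (ren r) _ U); auto. }
  pose proof (run_basic _ _ _ R B (APred p ts) (or_introl eq_refl)). exact H.
Qed.

Lemma me_contra P M C1 C2 p0 ts0 G0 h1 h2 p1 ts1 G1 p2 ts2 G2 :
  safe_clause M C1 -> safe_clause M C2 -> mutually_exclusive M C1 C2 ->
  atom_sat M (APred p0 ts0) ->
  step_using P C1 (APred p0 ts0 :: G0) h1 -> basic_run P h1 (APred p1 ts1 :: G1) ->
  step_using P C2 (APred p0 ts0 :: G0) h2 -> basic_run P h2 (APred p2 ts2 :: G2) -> False.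
Proof.
  intros Hs1 Hs2 HME [ms [Hms Hgr]] S1 R1 S2 R2.
  destruct S1 as [p [ts [G [C1' [s1 [Eg [_ [[r1 [Hr1 EC1]] [Ap1 [Ep1 [M1 Eh1]]]]]]]]]]].
  injection Eg as <- <- <-.
  destruct S2 as [p [ts [G [C2' [s2 [Eg [_ [[r2 [Hr2 EC2]] [Ap2 [Ep2 [M2 Eh2]]]]]]]]]]].
  injection Eg as <- <- <-.
  subst h1 h2.
  destruct M1 as [U1 [G1m [Rl1 _]]]. destruct M2 as [U2 [G2m [Rl2 _]]].
  assert (L1 : length (cargs C1') = length ts0).
  { pose proof (f_equal (@length term) U1) as H. rewrite !length_map in H. auto. }
  assert (L2 : length (cargs C2') = length ts0).
  { pose proof (f_equal (@length term) U2) as H. rewrite !length_map in H. auto. }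
  assert (HM1 : M (cpred C1) (length (cargs C1)) = Some ms).
  { subst C1'. simpl in *. rewrite length_map in L1. rewrite Ep1, L1. auto. }
  assert (HM2 : M (cpred C2) (length (cargs C2)) = Some ms).
  { subst C2'. simpl in *. rewrite length_map in L2. rewrite Ep2, L2. auto. }
  assert (Hms' : M (cpred C1') (length (cargs C1')) = Some ms) by (rewrite Ep1, L1; auto).
  set (N := S (list_max (cvars C1'))).
  set (sh := fun x => x + N).
  set (C2'' := csubst (ren sh) C2').
  assert (Fa1 : forall x, In x (lvars (input_args ms (cargs C1'))) -> x < N).
  { intros x Ix. apply max_lt. apply cargs_in. apply lvars_in in Ix. destruct Ix as [t [It Ixt]].
    apply lvars_in. exists t. split; auto. eapply input_args_in; eauto. }
  set (gsub := fun x => if x <? N then s1 x else s2 (x - N)).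
  assert (Gu : unifies gsub (input_args ms (cargs C1')) (input_args ms (cargs C2''))).
  { unfold unifies. transitivity (input_args ms ts0).
    - rewrite <- (inputs_match s1 ts0 (cargs C1') ms U1 Hgr). apply map_tsubst_ext. intros x Ix.
      unfold gsub. rewrite (proj2 (Nat.ltb_lt _ _)) by (apply Fa1; auto). reflexivity.
    - unfold C2''. simpl. rewrite input_args_map, map_tsubst_comp.
      rewrite <- (inputs_match s2 ts0 (cargs C2') ms U2 Hgr). apply map_tsubst_ext. intros x _.
      unfold ren, gsub, sh. simpl. destruct (x + N <? N) eqn:E. apply Nat.ltb_lt in E; lia. f_equal; lia. }
  assert (V1 : variant_clause C1 C1') by (exists r1; split; auto).
  assert (V2 : variant_clause C2 C2'').
  { exists (fun x => sh (r2 x)). split.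
    + intros x y H. unfold sh in H. apply Hr2. lia.
    + unfold C2''. rewrite EC2, csubst_comp_ren. reflexivity. }
  assert (AP : forall x, In x (cvars C1') -> ~ In x (cvars C2'')).
  { intros x Ix Ix2. unfold C2'' in Ix2. rewrite cvars_ren in Ix2. apply in_map_iff in Ix2.
    destruct Ix2 as [y [<- _]]. pose proof (max_lt _ _ Ix). unfold sh, N in *. lia. }
  assert (CP : cpred C1' = cpred C2'') by (unfold C2''; simpl; congruence).
  assert (LN : length (cargs C1') = length (cargs C2'')) by (unfold C2''; simpl; rewrite length_map; congruence).
  destruct (HME C1' C2'' V1 V2 AP CP LN ms Hms') as [NU|[th [Mth NS]]].
  - apply NU. exists gsub. exact Gu.
  - set (V := lvars (input_args ms (cargs C1') ++ input_args ms (cargs C2''))) in *.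
    destruct Mth as [Ut [Gt [Rt It]]].
    destruct (Gt gsub Gu) as [e He].
    set (sg := fun x => if in_dec Nat.eq_dec x V then gsub x else Var x).
    assert (Kin : forall x, In x V -> forall y, In y (tvars (th x)) -> In y V).
    { intros x Ix y Iy. destruct (classic (th x = Var x)) as [E|E].
      - rewrite E in Iy. destruct Iy as [<-|[]]; auto.
      - apply (proj2 (Rt x E)); auto. }
    assert (Key : forall x, In x V -> tsubst sg (th x) = gsub x).
    { intros x Ix. transitivity (tsubst gsub (th x)).
      - apply tsubst_ext; intros y Iy. unfold sg. destruct in_dec as [_|n]; auto. exfalso; eauto.
      - rewrite (tsubst_ext gsub (fun y => tsubst e (th y))) by (intros; apply He).
        rewrite <- tsubst_comp, It. symmetry; apply He. }
    assert (GrV : forall x, In x V -> ground (gsub x)).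
    { intros x Ix. unfold V in Ix. rewrite lvars_app in Ix. apply in_app_iff in Ix. destruct Ix as [Ix|Ix].
      - unfold gsub. rewrite (proj2 (Nat.ltb_lt _ _)) by (apply Fa1; auto).
        eapply input_ground; eauto.
      - unfold C2'' in Ix. simpl in Ix. rewrite input_args_map, lvars_ren in Ix.
        apply in_map_iff in Ix. destruct Ix as [y [<- Iy]]. unfold gsub, sh.
        destruct (y + N <? N) eqn:E. apply Nat.ltb_lt in E; lia.
        replace (y + N - N) with y by lia. eapply input_ground; eauto. }
    apply NS. exists sg. split; [|split].
    + intros x Ix. unfold sg. destruct in_dec; [apply GrV; auto|contradiction].
    + intros x n. unfold sg. destruct in_dec; [contradiction|auto].
    + intros t Ht a Ia.
      unfold gsubst in Ia. apply in_map_iff in Ia. destruct Ia as [a1 [<- Ia1]].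
      apply in_map_iff in Ia1. destruct Ia1 as [a2 [<- Ia2]].
      apply in_map_iff in Ia2. destruct Ia2 as [a0 [<- Ia0]].
      assert (Ea : exists u1 u2, a0 = ANeq u1 u2).
      { apply in_app_iff in Ia0. destruct Ia0 as [I|I]; eapply guard_neq; eauto. }
      destruct Ea as [u1 [u2 ->]].
      assert (Gd : forall u, In u [u1; u2] -> ground (tsubst t (tsubst sg (tsubst th u)))).
      { intros u Iu. apply ground_tsubst. intros x Ix. apply Ht. apply gvars_in.
        exists (asubst sg (asubst th (ANeq u1 u2))). split.
        - unfold gsubst. apply in_map. apply in_map. auto.
        - simpl. apply in_app_iff. destruct Iu as [<-|[<-|[]]]; auto. }
      simpl. split; [apply Gd; simpl; auto|split; [apply Gd; simpl; auto|]].
      apply in_app_iff in Ia0. destruct Ia0 as [I|I].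
      * destruct (guard_prefix (cbody C1')) as [rest Er].
        assert (NU1 : ~ unifiable [tsubst s1 u1] [tsubst s1 u2]).
        { rewrite Er, <- app_assoc, gsubst_app in R1.
          eapply (run_guard P (gsubst s1 (guard (cbody C1')))); eauto.
          - intros b Ib. unfold gsubst in Ib. apply in_map_iff in Ib. destruct Ib as [b0 [<- Ib0]].
            destruct (guard_neq _ _ Ib0) as [w1 [w2 ->]]. simpl; eauto.
          - change (ANeq (tsubst s1 u1) (tsubst s1 u2)) with (asubst s1 (ANeq u1 u2)).
            unfold gsubst; apply in_map; auto. }
        rewrite !tsubst_comp. subst C1'.
        eapply (side M C1 r1 s1 ts0 ms); eauto.
        -- apply rel_id with (V := lvars (ts0 ++ cargs (csubst (ren r1) C1))). exact Rl1.
        -- intros x Ix I'. apply (Ap1 x Ix). simpl. apply in_or_app; auto.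
        -- intros x Ix. split. eapply input_ground; eauto.
           rewrite <- !tsubst_comp. rewrite Key.
           unfold gsub. rewrite (proj2 (Nat.ltb_lt _ _)) by (apply Fa1; auto).
           apply ground_id. eapply input_ground; eauto.
           unfold V. rewrite lvars_app. apply in_or_app; auto.
        -- apply guard_in; auto.
      * unfold C2'' in I. simpl in I. rewrite guard_subst in I. unfold gsubst in I.
        apply in_map_iff in I. destruct I as [b [Eb Ib]].
        destruct (guard_neq _ _ Ib) as [w1 [w2 ->]]. simpl in Eb. injection Eb as <- <-.
        destruct (guard_prefix (cbody C2')) as [rest Er].
        assert (NU2 : ~ unifiable [tsubst s2 w1] [tsubst s2 w2]).
        { rewrite Er, <- app_assoc, gsubst_app in R2.
          eapply (run_guard P (gsubst s2 (guard (cbody C2')))); eauto.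
          - intros b Ib'. unfold gsubst in Ib'. apply in_map_iff in Ib'. destruct Ib' as [b0 [<- Ib0]].
            destruct (guard_neq _ _ Ib0) as [v1 [v2 ->]]. simpl; eauto.
          - change (ANeq (tsubst s2 w1) (tsubst s2 w2)) with (asubst s2 (ANeq w1 w2)).
            unfold gsubst; apply in_map; auto. }
        rewrite !tsubst_comp.
        assert (Ib2 : In (ANeq w1 w2) (cbody C2')) by (apply guard_in; auto).
        subst C2'.
        eapply (side M C2 r2 s2 ts0 ms); eauto.
        -- apply rel_id with (V := lvars (ts0 ++ cargs (csubst (ren r2) C2))). exact Rl2.
        -- intros x Ix I'. apply (Ap2 x Ix). simpl. apply in_or_app; auto.
        -- intros x Ix. split. eapply input_ground; eauto.
           simpl. rewrite <- !tsubst_comp. rewrite Key.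
           unfold gsub, sh. destruct (x + N <? N) eqn:E. apply Nat.ltb_lt in E; lia.
           replace (x + N - N) with x by lia.
           apply ground_id. eapply input_ground; eauto.
           unfold V. rewrite lvars_app. apply in_or_app; right. unfold C2''. simpl.
           rewrite input_args_map, lvars_ren. apply (in_map sh). auto.
Qed.

Theorem lemma16 (P : program) (M : mode) :
  mode_for M P ->
  safe M P ->
  prog_satisfies M P ->
  (forall C1 C2, P C1 -> P C2 -> C1 <> C2 ->
     ~ unit_clause C1 -> ~ unit_clause C2 -> mutually_exclusive M C1 C2) ->
  forall (p0 : nat) (ts0 : list term) (G0 : goal),
    atom_sat M (APred p0 ts0) -> basic_goal G0 ->
    forall p1 ts1 G1 p2 ts2 G2,
      derives P (APred p0 ts0 :: G0) (APred p1 ts1 :: G1) ->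
      derives P (APred p0 ts0 :: G0) (APred p2 ts2 :: G2) ->
      goal_variant (APred p1 ts1 :: G1) (APred p2 ts2 :: G2).
Proof.
  intros _ Hsafe _ Hme p0 ts0 G0 HA HG0 p1 ts1 G1 p2 ts2 G2
    [C1 [PC1 [h1 [S1 R1]]]] [C2 [PC2 [h2 [S2 R2]]]].
  destruct (classic (C1 = C2)) as [<-|Ne].
  - destruct (first_variant _ _ _ _ _ S1 S2) as [r [Hr E]].
    eapply run_variant; eauto. rewrite E. exact R2.
  - exfalso.
    pose proof (nonunit _ _ _ _ _ _ _ _ _ S1 HG0 R1) as NU1.
    pose proof (nonunit _ _ _ _ _ _ _ _ _ S2 HG0 R2) as NU2.
    eapply (me_contra P M C1 C2); eauto.
Qed.
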